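(* Let $I,J\in\mathbb{I}_{m,n}$ and $\ast\in\{ss,cc,tot\}$. Then $\bar d^\ast_{V_J}(I)=1$ if $I\le J$, and $\bar d^\ast_{V_J}(I)=0$ otherwise.
   Context: Fix a field $K$. For integers $m,n\ge1$, $G_{m,n}$ is the equioriented commutative $m\times n$ grid: the quiver with vertex set $\{(i,j):1\le i\le m,\ 1\le j\le n\}$ and arrows $(i,j)\to(i,j+1)$ and $(i,j)\to(i+1,j)$, bound by all commutativity relations; $\mathrm{rep}\,G_{m,n}$ is its category of finite-dimensional representations over $K$ satisfying the relations. An interval of $G_{m,n}$ is a nonempty full subquiver $I$ which is connected (as an undirected graph) and convex (whenever $x,y\in I_0$ and there are paths $x\to z$, $z\to y$ in $G_{m,n}$, then $z\in I_0$); $\mathbb{I}_{m,n}$ is the set of intervals ordered by inclusion of vertex sets. The interval representation $V_I$ has $K$ at vertices of $I$, $0$ elsewhere, identity maps on arrows inside $I$ and zero maps otherwise. Essential vertices: $I^{ss}_0$ is the set of sources and sinks of the quiver $I$; $I^{cc}_0=I_0\cap(\mathrm{pr}_1(I^{ss}_0)\times\mathrm{pr}_2(I^{ss}_0))$ with $\mathrm{pr}_1,\mathrm{pr}_2$ coordinate projections; $I^{tot}_0=I_0$. Let $KG_{m,n}$ be the $K$-linear category whose objects are the vertices and whose morphisms are $K$-linear combinations of paths modulo the commutativity relations; representations of $G_{m,n}$ are $K$-linear functors $KG_{m,n}\to\mathrm{vect}_K$. For $\ast\in\{ss,cc,tot\}$, $\mathcal{C}^\ast_I$ is the full subcategory of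 $KG_{m,n}$ on $I^\ast_0$, and the compression of $M$ is the restriction $M^\ast_I:=M|_{\mathcal{C}^\ast_I}$. The compressed multiplicity $\bar d^\ast_M(I)$ is the multiplicity of the indecomposable $(V_I)^\ast_I$ as a direct summand of $M^\ast_I$ (Krull–Schmidt). *)

(* Defs.v *)
From HB Require Import structures.
From mathcomp Require Import all_boot all_order all_algebra.
Set Implicit Arguments. Unset Strict Implicit. Unset Printing Implicit Defensive.
Import GRing.Theory.
Local Open Scope ring_scope.

(* Vertices of the m x n grid G_{m,n}, 0-based: (i,j) with i < m, j < n. *)
Definition gvert (m n : nat) := ('I_m * 'I_n)%type.

Definition grid_arrow (m n : nat) : rel (gvert m n) := fun x y =>
  ((x.1 == y.1 :> nat) && (y.2 == (x.2).+1 :> nat)) ||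
  ((x.2 == y.2 :> nat) && (y.1 == (x.1).+1 :> nat)).

Definition path_le (m n : nat) (x y : gvert m n) : bool :=
  connect (@grid_arrow m n) x y.

Definition undirected_in (m n : nat) (I : {set gvert m n}) : rel (gvert m n) :=
  fun x y => [&& x \in I, y \in I & grid_arrow x y || grid_arrow y x].

Definition is_interval (m n : nat) (I : {set gvert m n}) : Prop :=
  [/\ I != set0,
      (forall x y, x \in I -> y \in I -> connect (undirected_in I) x y) &
      (forall x y z, x \in I -> y \in I -> path_le x z -> path_le z y -> z \in I)].

Inductive ess_kind := SS | CC | TOT.

Definition is_source (m n : nat) (I : {set gvert m n}) (x : gvert m n) : bool :=
  [forall y in I, ~~ grid_arrow y x].
Definition is_sink (m n : nat) (I : {set gvert m n}) (x : gvert m n) : bool :=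
  [forall y in I, ~~ grid_arrow x y].

Definition ss_vert (m n : nat) (I : {set gvert m n}) : {set gvert m n} :=
  [set x in I | is_source I x || is_sink I x].

Definition cc_vert (m n : nat) (I : {set gvert m n}) : {set gvert m n} :=
  [set x in I | [exists s in ss_vert I, s.1 == x.1] &&
                [exists t in ss_vert I, t.2 == x.2]].

Definition ess_vert (k : ess_kind) (m n : nat) (I : {set gvert m n}) : {set gvert m n} :=
  match k with SS => ss_vert I | CC => cc_vert I | TOT => I end.

(* A representation of G_{m,n} = a K-linear functor KG_{m,n} -> vect_K.
   Hom_{KG}(x,y) is K.p_{xy} (p_{xy} the class of any path x->y) when a path
   exists and 0 otherwise, so the functor is given by matrices rmap x y
   (images of p_{xy}, for path_le x y), acting on row vectors v |-> v *m A.
   The values of rmap x y for ~~ path_le x y are irrelevant. *)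
Record grid_rep (K : fieldType) (m n : nat) := GridRep {
  rdim : gvert m n -> nat;
  rmap : forall x y : gvert m n, 'M[K]_(rdim x, rdim y) }.

Definition is_rep (K : fieldType) (m n : nat) (M : grid_rep K m n) : Prop :=
  (forall x, rmap M x x = 1%:M) /\
  (forall x y z, path_le x y -> path_le y z ->
     rmap M x y *m rmap M y z = rmap M x z).

Definition interval_rep (K : fieldType) (m n : nat) (I : {set gvert m n})
  : grid_rep K m n :=
  @GridRep K m n (fun x => nat_of_bool (x \in I))
    (fun x y => \matrix_(i, j) (if (x \in I) && (y \in I) then 1 else 0)).

(* Morphism of the compressions M|_{C_S} -> N|_{C_S}: components at the
   objects of S, natural w.r.t. all morphisms of the full subcategory C_S. *)
Definition is_morph_on (K : fieldType) (m n : nat) (S : {set gvert m n})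
  (M N : grid_rep K m n) (phi : forall x, 'M[K]_(rdim M x, rdim N x)) : Prop :=
  forall x y, x \in S -> y \in S -> path_le x y ->
    rmap M x y *m phi y = phi x *m rmap N x y.

(* N|_S ^{(+) k} is isomorphic to a direct summand of M|_S: there are
   f_j : N|_S -> M|_S, g_i : M|_S -> N|_S with g_i o f_j = delta_ij id. *)
Definition summand_power (K : fieldType) (m n : nat) (S : {set gvert m n})
  (N M : grid_rep K m n) (k : nat) : Prop :=
  exists (f : 'I_k -> forall x, 'M[K]_(rdim N x, rdim M x))
         (g : 'I_k -> forall x, 'M[K]_(rdim M x, rdim N x)),
    [/\ forall i, is_morph_on S (f i),
        forall i, is_morph_on S (g i) &
        forall i j x, x \in S ->
          f j x *m g i x = (if i == j then 1%:M else 0)].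

(* d is the multiplicity of the (indecomposable) N|_S as a direct summand of
   M|_S: the largest d such that (N|_S)^d is a direct summand of M|_S
   (summand_power is downward closed in k). *)
Definition summand_mult (K : fieldType) (m n : nat) (S : {set gvert m n})
  (N M : grid_rep K m n) (d : nat) : Prop :=
  summand_power S N M d /\ ~ summand_power S N M d.+1.

Definition compressed_mult (K : fieldType) (m n : nat) (k : ess_kind)
  (M : grid_rep K m n) (I : {set gvert m n}) (d : nat) : Prop :=
  summand_mult (ess_vert k I) (interval_rep K I) M d.

(* Main.v *)
From HB Require Import structures.
From mathcomp Require Import all_boot all_order all_algebra.
Require Import Defs.
Set Implicit Arguments. Unset Strict Implicit. Unset Printing Implicit Defensive.
Import GRing.Theory.
Local Open Scope ring_scope.

Lemma arrow_lt (m n : nat) (x y : gvert m n) :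
  grid_arrow y x -> (y.1 + y.2 < x.1 + x.2)%N.
Proof.
case/orP => /andP[/eqP e1 /eqP e2]; rewrite e1 e2.
  by rewrite addnS ltnS.
by rewrite addSn ltnS.
Qed.

Lemma exists_source (m n : nat) (I : {set gvert m n}) x : x \in I ->
  exists2 s, s \in ss_vert I & path_le s x.
Proof.
move=> xI.
pose P := [pred y | (y \in I) && path_le y x].
have Px : P x by rewrite /= xI; apply: connect0.
case: (arg_minnP (fun y : gvert m n => (y.1 + y.2)%N) Px) => s /andP[sI sx] smin.
exists s => //; rewrite inE sI /=; apply/orP; left.
apply/forallP => y; apply/implyP => yI; apply/negP => ys.
have : P y by rewrite /= yI; exact: connect_trans (connect1 ys) sx.
by move/smin; rewrite leqNgt (arrow_lt ys).
Qed.

Lemma exists_sink (m n : nat) (I : {set gvert m n}) x : x \in I ->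
  exists2 s, s \in ss_vert I & path_le x s.
Proof.
move=> xI.
pose P := [pred y | (y \in I) && path_le x y].
have Px : P x by rewrite /= xI; apply: connect0.
case: (arg_maxnP (fun y : gvert m n => (y.1 + y.2)%N) Px) => s /andP[sI sx] smax.
exists s => //; rewrite inE sI /=; apply/orP; right.
apply/forallP => y; apply/implyP => yI; apply/negP => ys.
have : P y by rewrite /= yI; exact: connect_trans sx (connect1 ys).
by move/smax => /= h; move: (arrow_lt ys); rewrite ltnNge h.
Qed.

Lemma ss_sub (m n : nat) (I : {set gvert m n}) k x :
  x \in ss_vert I -> x \in ess_vert k I.
Proof.
move=> xS; have xI : x \in I by move: xS; rewrite inE => /andP[].
case: k => //=.
rewrite inE xI /=; apply/andP; split; apply/existsP; exists x; by rewrite xS eqxx.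
Qed.

Lemma ess_subI (m n : nat) (I : {set gvert m n}) k x :
  x \in ess_vert k I -> x \in I.
Proof.
by case: k => //=; rewrite inE => /andP[].
Qed.

Lemma no_one (K : fieldType) (d r : nat) (f : 'M[K]_(d, r)) (g : 'M[K]_(r, d)) :
  f *m g = 1%:M -> (d <= r)%N.
Proof.
move=> h; have := mxrankM_maxl f g; rewrite h mxrank1 => H.
exact: leq_trans H (rank_leq_col f).
Qed.

Lemma no_two (K : fieldType) (d r : nat) (f : 'I_2 -> 'M[K]_(d, r))
  (g : 'I_2 -> 'M[K]_(r, d))
  (H : forall i j, f j *m g i = if i == j then 1%:M else 0) : (d + d <= r)%N.
Proof.
apply: (@no_one K _ _ (col_mx (f ord0) (f ord_max)) (row_mx (g ord0) (g ord_max))).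
rewrite mul_col_mx !mul_mx_row !H /= (scalar_mx_block d d).
by rewrite /block_mx.
Qed.

Lemma const_mul (K : fieldType) (p q r : nat) :
  (const_mx (1 : K) : 'M_(p, q)) *m (const_mx 1 : 'M_(q, r)) = const_mx (q%:R).
Proof.
apply/matrixP => i j; rewrite !mxE.
under eq_bigr do rewrite !mxE mul1r.
by rewrite sumr_const card_ord.
Qed.

Lemma rmap_const (K : fieldType) (m n : nat) (I : {set gvert m n}) x y :
  x \in I -> y \in I -> rmap (interval_rep K I) x y = const_mx 1.
Proof.
move=> xI yI; apply/matrixP => a b; by rewrite !mxE xI yI.
Qed.

Local Close Scope ring_scope.
Theorem mainTheorem9 (K : fieldType) (m n : nat) (hm : 0 < m) (hn : 0 < n)
  (I J : {set gvert m n}) (hI : is_interval I) (hJ : is_interval J)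
  (k : ess_kind) :
  compressed_mult k (interval_rep K J) I (if I \subset J then 1 else 0).
Proof.
Local Open Scope ring_scope.
rewrite /compressed_mult /summand_mult.
case: ifP => sub.
- split.
  + exists (fun _ x => const_mx 1), (fun _ x => const_mx 1); split.
    * move=> i x y xS yS _.
      have xI := ess_subI xS; have yI := ess_subI yS.
      have xJ := subsetP sub _ xI; have yJ := subsetP sub _ yI.
      rewrite !rmap_const // !const_mul /=.
      by rewrite yI xJ.
    * move=> i x y xS yS _.
      have xI := ess_subI xS; have yI := ess_subI yS.
      have xJ := subsetP sub _ xI; have yJ := subsetP sub _ yI.
      rewrite !rmap_const // !const_mul /=.
      by rewrite yJ xI.
    * move=> i j x xS; rewrite !ord1 eqxx const_mul.
      have xI := ess_subI xS; have xJ := subsetP sub _ xI.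
      apply/matrixP => a b; rewrite !mxE.
      have -> : a = b.
        have hx1 : (rdim (interval_rep K I) x <= 1)%N by rewrite /=; case: (x \in I).
        have ha := leq_trans (ltn_ord a) hx1; have hb := leq_trans (ltn_ord b) hx1.
        move: ha hb; rewrite !ltnS !leqn0 => /eqP ha /eqP hb.
        by apply/val_inj; rewrite /= ha hb.
      by rewrite eqxx /= xJ.
  + move=> [f [g [_ _ H]]].
    case: hI => /set0Pn [x xI] _ _.
    have [s sS _] := exists_source xI.
    have sE := ss_sub k sS.
    have := @no_two K _ _ (fun j => f j s) (fun i => g i s) (fun i j => H i j s sE).
    have sI := ess_subI sE.
    rewrite /= sI; by case: (s \in J).
- split.
  + exists (fun _ x => 0), (fun _ x => 0); split.
    * by move=> i x y _ _ _; rewrite mulmx0 mul0mx.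
    * by move=> i x y _ _ _; rewrite mulmx0 mul0mx.
    * by move=> [].
  + move=> [f [g [_ _ H]]].
    have [x xS xJ] : exists2 x, x \in ss_vert I & x \notin J.
      case/subsetPn: (negbT sub) => x xI xnJ.
      have [s sS sx] := exists_source xI.
      have [t tS xt] := exists_sink xI.
      case sJ: (s \in J); last by exists s; rewrite ?sJ.
      case tJ: (t \in J); last by exists t; rewrite ?tJ.
      case: hJ => _ _ hJ3.
      by rewrite (hJ3 s t x sJ tJ sx xt) in xnJ.
    have xE := ss_sub k xS.
    have := H ord0 ord0 x xE; rewrite eqxx => /no_one.
    by rewrite /= (ess_subI xE) (negbTE xJ).
Qed.
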